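(* Let $M$ be a commutative monoid. Every nonempty irreducible closed subset $Y$ of the terminal space $\mathcal S(M)$ has a unique generic point, i.e. there is a unique $I\in Y$ with $Y=\overline{\{I\}}$.
   Context: A monoid is a commutative monoid $(M,\cdot,1)$. An ideal of $M$ is a subset $I\subseteq M$ such that $im\in I$ for all $i\in I$, $m\in M$; it is proper if $I\neq M$. A proper ideal $K$ of $M$ is strongly irreducible if for all ideals $I,J$ of $M$, $I\cap J\subseteq K$ implies $I\subseteq K$ or $J\subseteq K$. $\mathcal S(M)$ is the set of all strongly irreducible ideals of $M$. For $X\subseteq\mathcal S(M)$, $\mathcal K(X)=\bigcap_{I\in X}I$, and $\mathcal{HK}(X)=\{J\in\mathcal S(M)\mid J\supseteq\mathcal K(X)\}$ if $X\neq\emptyset$, $\mathcal{HK}(\emptyset)=\emptyset$. The terminal space of $M$ is the set $\mathcal S(M)$ with the topology whose closed sets are exactly the sets $\mathcal{HK}(X)$, $X\subseteq\mathcal S(M)$. A subset $Y$ of a topological space is irreducible if whenever $Y\subseteq Y_1\cup Y_2$ with $Y_1,Y_2$ closed, then $Y\subseteq Y_1$ or $Y\subseteq Y_2$. *)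

(* Defs.v *)
From mathcomp Require Import all_boot.
From mathcomp Require Import boolp classical_sets.
Set Implicit Arguments. Unset Strict Implicit. Unset Printing Implicit Defensive.
Local Open Scope classical_set_scope.

Record comMonoid := ComMonoid {
  mcarrier :> Type;
  mmul : mcarrier -> mcarrier -> mcarrier;
  mone : mcarrier;
  mmulA : forall x y z, mmul x (mmul y z) = mmul (mmul x y) z;
  mmulC : forall x y, mmul x y = mmul y x;
  mmul1 : forall x, mmul mone x = x
}.

Section Terminal.
Variable M : comMonoid.

Definition ideal (I : set M) : Prop :=
  forall i m, I i -> I (mmul i m).

Definition strongly_irreducible (K : set M) : Prop :=
  [/\ ideal K, K <> setT &
      forall I J : set M, ideal I -> ideal J ->
        I `&` J `<=` K -> I `<=` K \/ J `<=` K].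

Definition SM : set (set M) := [set K | strongly_irreducible K].

Definition KK (X : set (set M)) : set M := \bigcap_(I in X) I.

Definition HK (X : set (set M)) : set (set M) :=
  [set J | X <> set0 /\ SM J /\ KK X `<=` J].

Definition ts_closed (F : set (set M)) : Prop :=
  exists X, X `<=` SM /\ F = HK X.

Definition ts_closure (A : set (set M)) : set (set M) :=
  [set J | forall F, ts_closed F -> A `<=` F -> F J].

Definition ts_irreducible (Y : set (set M)) : Prop :=
  forall Y1 Y2, ts_closed Y1 -> ts_closed Y2 ->
    Y `<=` Y1 `|` Y2 -> Y `<=` Y1 \/ Y `<=` Y2.

End Terminal.

(* Main.v *)
Require Import Defs.
From mathcomp Require Import all_boot.
From mathcomp Require Import boolp classical_sets.
Local Open Scope classical_set_scope.

Lemma KKP {M : comMonoid} (X : set (set M)) x :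
  KK X x <-> (forall J, X J -> J x).
Proof. by []. Qed.

Lemma KK_ideal {M : comMonoid} (X : set (set M)) :
  (forall J, X J -> ideal J) -> ideal (KK X).
Proof. by move=> H i m /KKP Hi; apply/KKP => J XJ; apply: H => //; apply: Hi. Qed.

Lemma KK_sub {M : comMonoid} {X : set (set M)} {J} : X J -> forall x, KK X x -> J x.
Proof. by move=> XJ x /KKP; apply. Qed.

Lemma HK_closed {M : comMonoid} {X : set (set M)} : X `<=` (@SM M) -> ts_closed (HK X).
Proof. by move=> H; exists X. Qed.

Theorem corollary2p7 (M : comMonoid) (Y : set (set M)) :
  ts_closed Y -> Y <> set0 -> ts_irreducible Y ->
  exists! I : set M, Y I /\ Y = ts_closure [set I].
Proof.
move=> [X [XS ->]] Yne Yirr.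
have Xne : X <> set0.
  move=> X0; apply: Yne; apply/seteqP; split => // J [] //.
have XI : forall J, X J -> ideal J by move=> J /XS [].
set K := KK X.
have Kid : ideal K by exact: KK_ideal.
have KSM : (@SM M) K.
  split => //.
    have [J XJ] : X !=set0 by apply/set0P/eqP. move=> KT; case: (XS J XJ) => _ JT _; apply: JT.
    apply/seteqP; split => // x _; have : K x by rewrite KT. exact: (KK_sub XJ).
  move=> A B IA IB AB.
  pose X1 := [set J | X J /\ A `<=` J].
  pose X2 := [set J | X J /\ B `<=` J].
  have cov : forall J, X J -> X1 J \/ X2 J.
    move=> J XJ; case: (XS J XJ) => _ _ H.
    case: (H A B IA IB (subset_trans AB (KK_sub XJ))) => h; [left|right]; by split.
  have [X1e|X1ne] := pselect (X1 = set0).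
    right => x Bx; apply/KKP => J XJ; case: (cov J XJ) => -[_ h].
      suff : X1 J by rewrite X1e.
      by split.
    by apply: h.
  have [X2e|X2ne] := pselect (X2 = set0).
    left => x Ax; apply/KKP => J XJ; case: (cov J XJ) => -[_ h].
      by apply: h.
    suff : X2 J by rewrite X2e.
    by split.
  have X1S : X1 `<=` (@SM M) by move=> J [] /XS.
  have X2S : X2 `<=` (@SM M) by move=> J [] /XS.
  have : HK X `<=` HK X1 `|` HK X2.
    move=> J [_ [JSM KJ]].
    case: (JSM) => _ _ H.
    have I1 : ideal (KK X1) by apply: KK_ideal => J' [] /XI.
    have I2 : ideal (KK X2) by apply: KK_ideal => J' [] /XI.
    have : KK X1 `&` KK X2 `<=` J.
      move=> x [/KKP h1 /KKP h2]; apply: KJ; apply/KKP => J' XJ'.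
      by case: (cov J' XJ') => h; [apply: h1|apply: h2].
    case/(H _ _ I1 I2) => h; [left|right]; by split.
  case/(Yirr _ _ (HK_closed X1S) (HK_closed X2S)) => h; [left|right].
    move=> x Ax; apply/KKP => J XJ.
    have : HK X1 J by apply: h; split => //; split; [exact: XS | exact: KK_sub].
    case=> _ [_ h1]; apply: h1; apply/KKP => J' [_]; by apply.
  move=> x Ax; apply/KKP => J XJ.
  have : HK X2 J by apply: h; split => //; split; [exact: XS | exact: KK_sub].
  case=> _ [_ h1]; apply: h1; apply/KKP => J' [_]; by apply.
have clos : forall I, (@SM M) I -> ts_closure [set I] = HK [set I].
  move=> I ISM; apply/seteqP; split.
    move=> J; apply; first by apply: HK_closed => ? ->.
    move=> _ ->; split; first by move=> /seteqP [/(_ I erefl)].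
    by split => // x /KKP; apply.
  move=> J [_ [JSM IJ]] F [Z [ZS ->]] sub.
  case: (sub I erefl) => Zne [_ ZI]; split => //; split => //.
  apply: (subset_trans ZI); apply: subset_trans IJ; move=> x xI; apply/KKP => _ ->. done.
exists K; split.
  split; first by split => //; split.
  rewrite clos //; apply/seteqP; split.
    move=> J [_ [JS KJ]]; split; first by move=> /seteqP [/(_ K erefl)].
    by split => // x /KKP h; apply: KJ; apply: h.
  move=> J [_ [JS KJ]]; split => //; split => // x Kx; apply: KJ; by apply/KKP => _ ->.
move=> I [[_ [ISM KI]] YE].
have KSY : HK X K by split => //; split.
rewrite YE clos // in KSY.
case: KSY => _ [_ IK].
apply/seteqP; split => x; first by apply: KI.
by move=> Ix; apply: IK; apply/KKP => _ ->.
Qed.
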